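(* Let $s>0$ and let $Z$ be a random variable that under $\mathbb{Q}$ has mean $0$, variance $1$ and a density $f_Z^{\mathbb{Q}}$ with $f_Z^{\mathbb{Q}}(x)>0$ for all $x\in\mathbb{R}$. Let $S_T=S_0e^{(r+\omega)T+s\sqrt{T}Z}$ where $\omega\in\mathbb{R}$ is such that $e^{-rT}E_{\mathbb{Q}}[S_T]=S_0$. Let $h^*>0$ and let $\mathcal{H}\subset[h^*,\infty)$ with $h^*\in\mathcal{H}$ and $E_{\mathbb{Q}}[S_T^h]<\infty$ for all $h\in\mathcal{H}$. For $h\in\mathcal{H}$ define $\mathbb{P}^h$ by $\frac{d\mathbb{P}^h}{d\mathbb{Q}}=\frac{S_T^h}{E_{\mathbb{Q}}[S_T^h]}$, and let $\mathcal{P}=\{\mathbb{P}^h:h\in\mathcal{H}\}$. Then $F^{\mathbb{P}^{h^*}}_{S_T}\preceq_{\mathbb{F}_{FSD}}F^{\mathbb{P}^h}_{S_T}$ (hence also $\preceq_{\mathbb{F}_{SSD}}$) for all $h\in\mathcal{H}$, $\mathbb{P}^{h^*}$ is a least favorable measure with respect to $\mathbb{F}_{FSD}$, and $\ell^{\mathbb{P}^{h^*}}$ is continuously distributed under $\mathbb{P}^{h^*}$. If moreover $h^*\in(0,1]$, then $\mathbb{P}^{h^*}$ is also a least favorable measure with respect to $\mathbb{F}_{SSD}$.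
   Context: Standing setting: fix $T>0$, $r\in\mathbb{R}$, $S_0>0$, and write $\mathbb{R}_+=[0,\infty)$; $\mathcal{F}=\sigma(S_T)$. For $\mathbb{P}\in\mathcal{P}$, $\ell^{\mathbb{P}}=d\mathbb{P}/d\mathbb{Q}$; $F_X^{\mathbb{P}}$ is the cdf of $X$ under $\mathbb{P}$. For a set $\mathbb{F}$ of measurable functions $\mathbb{R}_+\to\mathbb{R}$ and cdfs $F,G$ on $\mathbb{R}_+$, $F\preceq_{\mathbb{F}}G$ means $\int f\,dF\le\int f\,dG$ for all $f\in\mathbb{F}$ with finite integrals. $\mathbb{F}_{FSD}$ is the set of all non-decreasing functions $\mathbb{R}_+\to\mathbb{R}$; $\mathbb{F}_{SSD}$ is the set of all non-decreasing concave functions $\mathbb{R}_+\to\mathbb{R}$. A measure $\mathbb{P}^*\in\mathcal{P}$ with $\ell^*=d\mathbb{P}^*/d\mathbb{Q}$ is least favorable w.r.t. $\mathbb{F}$ if $F_{\ell^*}^{\mathbb{P}^*}\preceq_{\mathbb{F}}F_{\ell^*}^{\mathbb{P}}$ for all $\mathbb{P}\in\mathcal{P}$. *)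

(* Defs.v *)
From HB Require Import structures.
From mathcomp Require Import all_boot all_order all_algebra.
From mathcomp Require Import all_classical all_reals all_analysis.
Set Implicit Arguments. Unset Strict Implicit. Unset Printing Implicit Defensive.
Import Order.TTheory GRing.Theory Num.Theory.
Import numFieldNormedType.Exports.
Local Open Scope classical_set_scope.
Local Open Scope ring_scope.

Section defs.
Context {d : measure_display} {T : measurableType d} {R : realType}.

(* Integral of f : R_+ -> R against the cdf F_X^P of X (X >= 0) under P,
   i.e. \int f dF_X^P = E_P[f(X)]. *)
Definition cdf_integral (P : probability T R) (X : T -> R) (f : R -> R) : \bar R :=
  (\int[P]_w (f (X w))%:E)%E.

Definition cdf_integrable (P : probability T R) (X : T -> R) (f : R -> R) : Prop :=
  P.-integrable [set: T] (fun w => (f (X w))%:E).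

Definition stoch_le (FF : set (R -> R))
    (P : probability T R) (X : T -> R) (P' : probability T R) (Y : T -> R) : Prop :=
  forall f, FF f -> cdf_integrable P X f -> cdf_integrable P' Y f ->
    (cdf_integral P X f <= cdf_integral P' Y f)%E.

Definition cdfR (P : probability T R) (X : T -> R) (x : R) : R :=
  fine (P [set w | X w <= x]).

Definition is_density (Q P : probability T R) (ell : T -> R) : Prop :=
  forall A, measurable A -> P A = (\int[Q]_(w in A) (ell w)%:E)%E.

Definition least_favorable (Q : probability T R) (Pfam : set (probability T R))
    (FF : set (R -> R)) (Pstar : probability T R) (lstar : T -> R) : Prop :=
  [/\ Pfam Pstar, is_density Q Pstar lstar &
      forall P, Pfam P -> stoch_le FF Pstar lstar P lstar].

End defs.

(* functions R_+ -> R (represented as R -> R, only values on [0,oo) matter) *)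
Definition F_FSD {R : realType} : set (R -> R) :=
  [set f | {in `[0, +oo[ &, forall x y : R, x <= y -> f x <= f y}].

Definition F_SSD {R : realType} : set (R -> R) :=
  [set f | F_FSD f /\
    {in `[0, +oo[ &, forall x y : R, forall t : R, 0 <= t <= 1 ->
       t * f x + (1 - t) * f y <= f (t * x + (1 - t) * y)}].

(* Main.v *)
Require Import Defs.
From HB Require Import structures.
From mathcomp Require Import all_boot all_order all_algebra.
From mathcomp Require Import all_classical all_reals all_analysis.
From mathcomp Require Import measurable_realfun ring lra.
Import Order.TTheory GRing.Theory Num.Theory.
Import numFieldNormedType.Exports.
Local Open Scope classical_set_scope.
Local Open Scope ring_scope.
Section cov.
Context d (T : measurableType d) (R : realType).
Variables (mu nu : probability T R) (ell : T -> R).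
Hypothesis mell : measurable_fun setT ell.
Hypothesis ell0 : forall x, 0 <= ell x.
Hypothesis dens : is_density mu nu ell.
Local Open Scope ereal_scope.
Import HBNNSimple.

Lemma cov_ge0 (f : T -> \bar R) E : (forall x, 0 <= f x) ->
    measurable E -> measurable_fun E f ->
  \int[mu]_(x in E) (f x * (ell x)%:E) = \int[nu]_(x in E) f x.
Proof.
move=> f0 mE mf; set g := fun x => (ell x)%:E.
have mg : measurable_fun setT g by exact/measurable_EFinP.
have g0 x : 0 <= g x by rewrite lee_fin.
pose h := nnsfun_approx mE mf.
have -> : \int[nu]_(x in E) f x =
    lim (\int[nu]_(x in E) (EFin \o h n) x @[n --> \oo]).
  have fE x : E x -> f x = lim ((EFin \o h n) x @[n --> \oo]).
    by move=> Ex; apply/esym/cvg_lim => //; exact: cvg_nnsfun_approx.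
  under eq_integral => x /[!inE] /fE -> //.
  apply: monotone_convergence => //.
  - move=> n; apply/measurable_EFinP.
    by apply: (measurable_funS measurableT) => //; exact/measurable_funP.
  - by move=> n x Ex //=; rewrite lee_fin.
  - by move=> x Ex a b ab; rewrite lee_fin; exact/lefP/nd_nnsfun_approx.
have -> : \int[mu]_(x in E) (f x * g x) =
    lim (\int[mu]_(x in E) ((EFin \o h n) x * g x) @[n --> \oo]).
  have fg x : E x -> f x * g x = lim (((EFin \o h n) \* g) x @[n --> \oo]).
    by move=> Ex; apply/esym/cvg_lim => //; apply: cvgeZr;
      [by []|exact: cvg_nnsfun_approx].
  under eq_integral => x /[!inE] /fg -> //.
  apply: monotone_convergence => [//| | |].
  - move=> n; apply/emeasurable_funM; apply/measurable_funTS.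
      exact/measurable_EFinP.
    exact: mg.
  - by move=> n x Ex /=; rewrite mule_ge0 ?lee_fin.
  - by move=> x Ex a b ab/=; rewrite lee_wpmul2r ?lee_fin//; exact/lefP/nd_nnsfun_approx.
suff suf n : \int[mu]_(x in E) ((EFin \o h n) x * g x) =
    \int[nu]_(x in E) (EFin \o h n) x.
  by under eq_fun do rewrite suf.
transitivity (\int[nu]_(x in E)
   (\sum_(y \in range (h n)) (y * \1_(h n @^-1` [set y]) x)%:E)); last first.
  by apply: eq_integral => t tE; rewrite /= fimfunE -fsumEFin.
have indich m r : measurable_fun E (fun x => (r * \1_(h m @^-1` [set r]) x)%:E).
  by apply: (measurable_comp measurableT) => //; exact: measurable_funM.
rewrite ge0_integral_fsum//; last by move=> m y Ey; exact: nnfun_muleindic_ge0.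
transitivity (\int[mu]_(x in E) (\sum_(y \in range (h n))
    (y * \1_(h n @^-1` [set y]) x)%:E * g x)).
  under [RHS]eq_integral => x xE.
    rewrite -ge0_mule_fsuml => [|y]; last exact: nnfun_muleindic_ge0.
    rewrite fsumEFin // -(fimfunE _ x); over.
  by [].
rewrite ge0_integral_fsum//; last 2 first.
  - move=> y; apply: emeasurable_funM => //; apply: measurable_funTS.
    exact: mg.
  - by move=> m y Ey; rewrite mule_ge0 ?nnfun_muleindic_ge0.
apply: eq_fsbigr => r rhn.
under [RHS]eq_integral do rewrite EFinM.
rewrite integralZl_indic_nnsfun => //.
under eq_integral do rewrite EFinM -muleA.
rewrite ge0_integralZl//.
- under eq_integral do rewrite muleC.
  rewrite (eq_integral (g \_ (h n @^-1` [set r]))); last first.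
    by move=> x xE; rewrite epatch_indic.
  rewrite -integral_mkcondr integral_indic// setIC.
  by rewrite /g -dens//; apply: measurableI => //; exact: measurable_sfunP.
- apply: emeasurable_funM; first exact/measurable_EFinP.
  exact/measurable_funTS/mg.
- by move=> t Et; rewrite mule_ge0 ?lee_fin.
- by move: rhn; rewrite inE => -[t _ <-]; rewrite lee_fin.
Qed.
Lemma cov_int (g : T -> R) : nu.-integrable setT (EFin \o g) ->
  mu.-integrable setT (fun x => (g x * ell x)%:E) /\
  \int[nu]_x (g x)%:E = \int[mu]_x (g x * ell x)%:E.
Proof.
move=> ig.
have mg : measurable_fun setT g by apply/measurable_EFinP; exact: measurable_int ig.
have mgl : measurable_fun setT (fun x => (g x * ell x)%:E).
  by apply/measurable_EFinP; exact: measurable_funM.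
have pos (k : T -> R) : (fun x => (k x * ell x)%:E)^\+ = (fun x => ((EFin \o k)^\+ x) * (ell x)%:E).
  apply/funext => x; rewrite !funeposE /= EFinM [RHS]muleC maxe_pMr ?lee_fin// mule0.
  by rewrite muleC.
have neg (k : T -> R) : (fun x => (k x * ell x)%:E)^\- = (fun x => ((EFin \o k)^\- x) * (ell x)%:E).
  apply/funext => x; rewrite !funenegE /= -mulNr EFinM [RHS]muleC maxe_pMr ?lee_fin// mule0.
  by rewrite muleC.
split.
  apply/integrableP; split => //.
  under eq_integral => x _ do rewrite EFinM abseM (@gee0_abs _ (ell x)%:E) ?lee_fin//.
  rewrite cov_ge0//; first by case/integrableP: ig.
  by apply: measurableT_comp => //; exact/measurable_EFinP.
rewrite integralE [RHS]integralE pos neg.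
rewrite cov_ge0//; last by apply: measurable_funepos; exact/measurable_EFinP.
rewrite cov_ge0//; last by apply: measurable_funeneg; exact/measurable_EFinP.
Qed.
End cov.

Section key.
Context d (T : measurableType d) (R : realType).
Local Open Scope ereal_scope.

Lemma dens_integrable (Q P : probability T R) (a : T -> R) :
  measurable_fun setT a -> (forall w, (0 <= a w)%R) -> is_density Q P a ->
  Q.-integrable setT (EFin \o a) /\ \int[Q]_w (a w)%:E = 1.
Proof.
move=> ma a0 da.
have e : \int[Q]_w (a w)%:E = 1 by rewrite -da// probability_setT.
split => //; apply/integrableP; split; first exact/measurable_EFinP.
rewrite (eq_integral (fun w => (a w)%:E)); first by rewrite e ltry.
by move=> x _; rewrite /= ger0_norm.
Qed.

Lemma fsd_key (Q P1 P2 : probability T R) (X a b : T -> R) (x0 : R) :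
  measurable_fun setT a -> measurable_fun setT b ->
  (forall w, (0 <= a w)%R) -> (forall w, (0 <= b w)%R) ->
  is_density Q P1 a -> is_density Q P2 b -> (0 <= x0)%R -> (forall w, (0 <= X w)%R) ->
  (forall w, (X w <= x0 -> b w <= a w)%R /\ (x0 <= X w -> a w <= b w)%R) ->
  stoch_le F_FSD P1 X P2 X.
Proof.
move=> ma mb a0 b0 da db x00 X0 hab f Ff i1 i2.
rewrite /cdf_integral.
have /= [j1 ->] := @cov_int _ _ _ Q P1 a ma a0 da (fun w => f (X w)) i1.
have /= [j2 ->] := @cov_int _ _ _ Q P2 b mb b0 db (fun w => f (X w)) i2.
have [ia ea] := @dens_integrable Q P1 a ma a0 da.
have [ib eb] := @dens_integrable Q P2 b mb b0 db.
set c := f x0.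
have ica : Q.-integrable setT (fun w => (c * a w)%:E).
  by under eq_fun do rewrite EFinM; exact: integrableZl.
have icb : Q.-integrable setT (fun w => (c * b w)%:E).
  by under eq_fun do rewrite EFinM; exact: integrableZl.
have key : \int[Q]_w ((f (X w) * a w)%:E + (c * b w)%:E) <=
           \int[Q]_w ((f (X w) * b w)%:E + (c * a w)%:E).
  apply: le_integral => //; try exact: integrableD.
  move=> w _; rewrite -!EFinD lee_fin.
  have Xin : X w \in `[0%R, +oo[ by rewrite in_itv /= X0.
  have x0in : x0 \in `[0%R, +oo[ by rewrite in_itv /= x00.
  have [h1 h2] := hab w.
  suff : (0 <= (f (X w) - c) * (b w - a w))%R by lra.
  case: (lerP (X w) x0) => hx.
  - apply: mulr_le0; rewrite subr_le0; [exact: Ff|exact: h1].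
  - apply: mulr_ge0; rewrite subr_ge0; [exact: Ff (ltW hx)|exact: h2 (ltW hx)].
rewrite integralD_EFin// integralD_EFin// in key.
move: key.
rewrite (_ : \int[Q]_w (c * b w)%:E = c%:E); last first.
  by under eq_integral do rewrite EFinM; rewrite integralZl// eb mule1.
rewrite (_ : \int[Q]_w (c * a w)%:E = c%:E); last first.
  by under eq_integral do rewrite EFinM; rewrite integralZl// ea mule1.
by rewrite leeD2rE.
Qed.
End key.

Lemma arch_inv (R : realType) (e : R) : 0 < e -> exists n : nat, n.+1%:R^-1 < e.
Proof.
move=> e0; exists (Num.Def.trunc e^-1).
rewrite -[e in _ < e]invrK ltf_pV2 ?posrE ?invr_gt0 ?ltr0n//.
exact: truncnS_gt.
Qed.

Lemma mono_cont (R : realType) (G : R -> R) (x : R) :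
  {homo G : a b / a <= b} ->
  G (x + n.+1%:R^-1) @[n --> \oo] --> G x ->
  G (x - n.+1%:R^-1) @[n --> \oo] --> G x ->
  G @ x --> G x.
Proof.
move=> ndG hR hL; apply/cvgrPdist_le => e e0.
have r1 : \forall t \near \oo, `|G x - G (x + t.+1%:R^-1)| <= e by move: e e0; apply/cvgrPdist_le.
have r2 : \forall t \near \oo, `|G x - G (x - t.+1%:R^-1)| <= e by move: e e0 {r1}; apply/cvgrPdist_le.
have [n [hn1 hn2]] := filter_ex (filterI r1 r2).
exists (n.+1%:R^-1) => /=; first by rewrite invr_gt0 ltr0n.
move=> y /= hy.
move: hy; rewrite ltr_distlC => /andP[h1 h2].
have a1 := ndG _ _ (ltW h1).
have a2 := ndG _ _ (ltW h2).
have b1 : G (x - n.+1%:R^-1) <= G x by apply: ndG; rewrite lerBlDr lerDl.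
have b2 : G x <= G (x + n.+1%:R^-1) by apply: ndG; rewrite lerDl.
move: hn1 hn2 => /=; rewrite !ler_norml => /andP[c1 c2] /andP[c3 c4].
apply/andP; split; lra.
Qed.

Section cont.
Context d (Omega : measurableType d) (R : realType).
Variables (P : probability Omega R) (X : Omega -> R).
Hypothesis mX : measurable_fun setT X.
Hypothesis hP0 : forall x, P [set w | X w = x] = 0%E.

Let mle x : measurable [set w | X w <= x].
Proof.
rewrite (_ : [set w | X w <= x] = X @^-1` `]-oo, x]); last first.
  by apply/seteqP; split => w /=; rewrite in_itv.
by rewrite -[X @^-1` _]setTI; exact: mX.
Qed.

Let mlt x : measurable [set w | X w < x].
Proof.
rewrite (_ : [set w | X w < x] = X @^-1` `]-oo, x[); last first.
  by apply/seteqP; split => w /=; rewrite in_itv.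
by rewrite -[X @^-1` _]setTI; exact: mX.
Qed.

Let meq x : measurable [set w | X w = x].
Proof.
rewrite (_ : [set w | X w = x] = X @^-1` [set x]); last by [].
by rewrite -[X @^-1` _]setTI; exact: mX.
Qed.

Let fin A : measurable A -> P A \is a fin_num.
Proof. by move=> mA; exact: fin_num_measure. Qed.

Lemma cdfR_cont : continuous (cdfR P X).
Proof.
move=> x; apply: mono_cont.
- move=> a b ab; rewrite /cdfR fine_le ?fin//; apply: le_measure; rewrite ?inE//.
  by move=> w /= /le_trans; apply.
- have cR : (fun n => P [set w | X w <= x + n.+1%:R^-1]) @ \oo --> P [set w | X w <= x].
    rewrite (_ : [set w | X w <= x] = \bigcap_n [set w | X w <= x + n.+1%:R^-1]).
      apply: (@nonincreasing_cvg_mu _ _ _ P (fun n => [set w | X w <= x + n.+1%:R^-1])).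
      + by rewrite -ge0_fin_numE ?fin.
      + by move=> n; exact: mle.
      + by apply: bigcapT_measurable => n; exact: mle.
      + move=> m n mn; apply/subsetPset => w /= /le_trans; apply.
        by rewrite lerD2l lef_pV2 ?posrE ?ltr0n// ler_nat.
    apply/seteqP; split => w /=.
      by move=> h n _ /=; apply: (le_trans h); rewrite lerDl.
    move=> h; rewrite leNgt; apply/negP => hx.
    have hx' : 0 < X w - x by rewrite subr_gt0.
    have [n hn] := @arch_inv R _ hx'.
    have := h n I; rewrite /=; move: hn; set t := (n.+1%:R^-1); move=> hn h1; lra.
  have := fine_cvg (_ : _ --> (fine (P [set w | X w <= x]))%:E).
  by apply; rewrite fineK ?fin.
- have cL : (fun n => P [set w | X w <= x - n.+1%:R^-1]) @ \oo --> P [set w | X w < x].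
    rewrite (_ : [set w | X w < x] = \bigcup_n [set w | X w <= x - n.+1%:R^-1]).
      apply: (@nondecreasing_cvg_mu _ _ _ P (fun n => [set w | X w <= x - n.+1%:R^-1])).
      + by move=> n; exact: mle.
      + by apply: bigcupT_measurable => n; exact: mle.
      + move=> m n mn; apply/subsetPset => w /= /le_trans; apply.
        by rewrite lerD2l lerN2 lef_pV2 ?posrE ?ltr0n// ler_nat.
    apply/seteqP; split => w /=.
      move=> hx.
      have hx' : 0 < x - X w by rewrite subr_gt0.
      have [n hn] := @arch_inv R _ hx'.
      by exists n => //=; move: hn; set t := (n.+1%:R^-1); move=> hn; lra.
    by move=> [n _ /=] h; apply: (le_lt_trans h); rewrite ltrBlDr ltrDl invr_gt0 ltr0n.
  have eq : P [set w | X w < x] = P [set w | X w <= x].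
    rewrite (_ : [set w | X w <= x] = [set w | X w < x] `|` [set w | X w = x]).
      rewrite measureU//; first by rewrite -[LHS]adde0; congr (_ + _); exact: (esym (hP0 x)).
      by apply/seteqP; split => v //= [h1 h2]; rewrite h2 ltxx in h1.
    apply/seteqP; split => w /=.
      by rewrite le_eqVlt => /predU1P[->|h]; [right|left].
    by case => [/ltW|->].
  rewrite eq in cL.
  have := fine_cvg (_ : _ --> (fine (P [set w | X w <= x]))%:E).
  by apply; rewrite fineK ?fin.
Qed.
End cont.

Lemma cdf_cont d (Omega : measurableType d) (R : realType)
  (Q P : probability Omega R) (Z : Omega -> R) (fZ : R -> R) (phi : R -> R)
  (ellf : Omega -> R) :
  measurable_fun [set: Omega] Z ->
  measurable_fun [set: R] fZ ->
  (forall A, measurable A ->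
     Q (Z @^-1` A) = (\int[lebesgue_measure]_(x in A) (fZ x)%:E)%E) ->
  measurable_fun setT ellf -> (forall w, 0 <= ellf w) -> is_density Q P ellf ->
  (forall w, ellf w = phi (Z w)) -> injective phi ->
  continuous (cdfR P ellf).
Proof.
move=> mZ mfZ hZ mell ell0 dens hphi inj.
have meq x : measurable [set w | ellf w = x].
  rewrite (_ : [set w | ellf w = x] = ellf @^-1` [set x]); last by [].
  by rewrite -[ellf @^-1` _]setTI; exact: mell.
apply: cdfR_cont => // x.
have Q0 : Q [set w | ellf w = x] = 0%E.
  have [[z hz]|nz] := pselect (exists z, phi z = x).
  - have sub : [set w | ellf w = x] `<=` Z @^-1` [set z].
      by move=> w /=; rewrite hphi -hz => /inj.
    have mZz : measurable (Z @^-1` [set z]).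
      by rewrite -[Z @^-1` _]setTI; exact: mZ.
    have Qz : Q (Z @^-1` [set z]) = 0%E.
      rewrite hZ//; apply: null_set_integral => //.
      + apply/measurable_EFinP; exact: measurable_funTS.
      + exact: lebesgue_measure_set1.
    apply/eqP; rewrite eq_le measure_ge0 andbT -Qz.
    by apply: le_measure => //; rewrite inE.
  - rewrite (_ : [set w | ellf w = x] = set0) ?measure0//.
    apply/seteqP; split => w //= h; apply: nz; exists (Z w); by rewrite -hphi.
rewrite dens//; apply: null_set_integral => //.
apply/measurable_EFinP; exact: measurable_funTS.
Qed.

Section aux.
Context d (T : measurableType d) (R : realType).

Lemma stoch_le_sub (FF GG : set (R -> R)) (P1 P2 : probability T R) X Y :
  GG `<=` FF -> stoch_le FF P1 X P2 Y -> stoch_le GG P1 X P2 Y.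
Proof. by move=> GF h f /GF; exact: h. Qed.

Lemma stoch_le_comp (P1 P2 : probability T R) (X : T -> R) (phi : R -> R) :
  (forall x y, 0 <= x -> x <= y -> 0 <= phi x /\ phi x <= phi y) ->
  stoch_le F_FSD P1 X P2 X -> stoch_le F_FSD P1 (phi \o X) P2 (phi \o X).
Proof.
move=> hphi h f Ff i1 i2.
have Fg : F_FSD (f \o phi).
  move=> x y; rewrite !in_itv /= !andbT => x0 y0 xy.
  have [p0 pxy] := hphi x y x0 xy.
  have [p1 _] := hphi y y y0 (le_refl _).
  by apply: Ff => //; rewrite in_itv /= andbT.
exact: (h _ Fg i1 i2).
Qed.

Lemma aux_le (p q ch cs : R) : 0 <= p -> 0 < ch -> 0 < cs -> q <= ch / cs ->
  p * q / ch <= p / cs.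
Proof.
move=> p0 ch0 cs0 hq.
have e : p * q / ch - p / cs = p / ch * (q - ch / cs).
  by field; apply/andP; split; rewrite gt_eqF.
rewrite -subr_le0 e; apply: mulr_ge0_le0; first by rewrite divr_ge0// ltW.
by rewrite subr_le0.
Qed.

Lemma aux_ge (p q ch cs : R) : 0 <= p -> 0 < ch -> 0 < cs -> ch / cs <= q ->
  p / cs <= p * q / ch.
Proof.
move=> p0 ch0 cs0 hq.
have e : p * q / ch - p / cs = p / ch * (q - ch / cs).
  by field; apply/andP; split; rewrite gt_eqF.
rewrite -subr_ge0 e; apply: mulr_ge0; first by rewrite divr_ge0// ltW.
by rewrite subr_ge0.
Qed.
End aux.

Theorem mainTheorem7 (d : measure_display) (Omega : measurableType d) (R : realType)
  (T r S0 : R) (Q : probability Omega R) (Z : Omega -> R) (fZ : R -> R)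
  (s omega hstar : R) (H : set R) (P : R -> probability Omega R) :
  0 < T -> 0 < S0 -> 0 < s ->
  measurable_fun [set: Omega] Z ->
  measurable_fun [set: R] fZ ->
  (forall x, 0 < fZ x) ->
  (forall A, measurable A ->
     Q (Z @^-1` A) = (\int[lebesgue_measure]_(x in A) (fZ x)%:E)%E) ->
  Q.-integrable [set: Omega] (EFin \o Z) ->
  ('E_Q[Z] = 0)%E ->
  ('V_Q[Z] = 1)%E ->
  let ST := fun w => S0 * expR ((r + omega) * T + s * Num.sqrt T * Z w) in
  ((expR (- r * T))%:E * 'E_Q[ST] = S0%:E)%E ->
  0 < hstar -> H `<=` `[hstar, +oo[ -> H hstar ->
  (forall h, H h -> ('E_Q[fun w => (ST w `^ h)%R] < +oo)%E) ->
  let ell := fun h w => ST w `^ h / fine ('E_Q[fun w => (ST w `^ h)%R])%E in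
  (forall h, H h -> is_density Q (P h) (ell h)) ->
  [/\ (forall h, H h -> stoch_le F_FSD (P hstar) ST (P h) ST),
      (forall h, H h -> stoch_le F_SSD (P hstar) ST (P h) ST),
      least_favorable Q (P @` H) F_FSD (P hstar) (ell hstar),
      continuous (cdfR (P hstar) (ell hstar)) &
      (hstar <= 1 -> least_favorable Q (P @` H) F_SSD (P hstar) (ell hstar))].
Proof.
move=> T0 S00 s0 mZ mfZ fZ0 hZ iZ EZ VZ ST hw hs0 HH Hhs hfin ell dens.
have STpos w : 0 < ST w by rewrite mulr_gt0// expR_gt0.
have mST : measurable_fun setT ST.
  apply: measurable_funM => //; apply: measurableT_comp => //.
  apply: measurable_funD => //; apply: measurable_funM => //.
pose c h := fine ('E_Q[fun w => (ST w `^ h)%R])%E.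
have c0 h : 0 <= c h.
  by apply: fine_ge0; apply: expectation_ge0 => x; exact: powR_ge0.
have mell h : measurable_fun setT (ell h).
  apply: measurable_funM => //; exact: (measurableT_comp (measurable_powR _) mST).
have ell0 h w : 0 <= ell h w by apply: divr_ge0; [exact: powR_ge0|exact: c0].
have cpos h : H h -> 0 < c h.
  move=> Hh; rewrite lt_neqAle c0 andbT; apply/negP => /eqP ch.
  have := dens h Hh setT measurableT; rewrite probability_setT.
  under eq_integral => w _ do rewrite /ell -/(c h) -ch invr0 mulr0.
  by rewrite integral0 => -[] /eqP; rewrite oner_eq0.
have fsd h : H h -> stoch_le F_FSD (P hstar) ST (P h) ST.
  move=> Hh; have [->|hne] := eqVneq h hstar.
    by move=> f _ _ _; exact: le_refl.
  have hgt : hstar < h.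
    have := HH h Hh; rewrite /= in_itv /= andbT le_eqVlt => /predU1P[e|//].
    by rewrite e eqxx in hne.
  set del := h - hstar.
  have del0 : 0 < del by rewrite subr_gt0.
  pose x0 := (c h / c hstar) `^ (del^-1).
  have x0del : x0 `^ del = c h / c hstar.
    rewrite /x0 -powRrM mulVf ?gt_eqF// powRr1// divr_ge0//.
  apply: (@fsd_key _ _ _ Q (P hstar) (P h) ST (ell hstar) (ell h) x0) => //.
  - exact: dens.
  - exact: dens.
  - exact: powR_ge0.
  - by move=> w; exact: ltW.
  move=> w.
  have eh : ell h w = ST w `^ hstar * ST w `^ del / c h.
    rewrite /ell -/(c h) -powRD; first by rewrite /del addrC subrK.
    by apply/implyP => _; rewrite gt_eqF.
  have ehs : ell hstar w = ST w `^ hstar / c hstar by [].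
  rewrite eh ehs; split => hx.
  - apply: aux_le; [exact: powR_ge0|exact: cpos|exact: cpos|].
    rewrite -x0del; apply: ge0_ler_powR => //; first exact: ltW.
    + by rewrite nnegrE ltW.
    + by rewrite nnegrE powR_ge0.
  - apply: aux_ge; [exact: powR_ge0|exact: cpos|exact: cpos|].
    rewrite -x0del; apply: ge0_ler_powR => //; first exact: ltW.
    + by rewrite nnegrE powR_ge0.
    + by rewrite nnegrE ltW.
have phimono : forall x y, 0 <= x -> x <= y ->
    0 <= x `^ hstar / c hstar /\ x `^ hstar / c hstar <= y `^ hstar / c hstar.
  move=> x y x0 xy; split; first by rewrite divr_ge0// powR_ge0.
  rewrite ler_pM2r ?invr_gt0 ?cpos//.
  apply: ge0_ler_powR; rewrite ?nnegrE//; try exact: ltW; exact: (le_trans x0 xy).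
have lf : least_favorable Q (P @` H) F_FSD (P hstar) (ell hstar).
  split; [by exists hstar|exact: dens|].
  move=> _ [h Hh <-].
  exact: (@stoch_le_comp _ _ _ (P hstar) (P h) ST (fun x => x `^ hstar / c hstar) phimono (fsd h Hh)).
have SF : F_SSD `<=` (F_FSD : set (R -> R)) by move=> f [].
split => //.
- by move=> h Hh; apply: stoch_le_sub SF (fsd h Hh).
- pose phi z := (S0 * expR ((r + omega) * T + s * Num.sqrt T * z)) `^ hstar / c hstar.
  have sT0 : 0 < s * Num.sqrt T by rewrite mulr_gt0// sqrtr_gt0.
  have phimon z1 z2 : z1 < z2 -> phi z1 < phi z2.
    move=> z12; rewrite /phi ltr_pM2r ?invr_gt0 ?cpos//.
    apply: gt0_ltr_powR => //; rewrite ?nnegrE ?mulr_ge0 ?expR_ge0 ?ltW//.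
    by rewrite ltr_pM2l// ltr_expR ltrD2l ltr_pM2l.
  apply: (@cdf_cont _ _ _ Q (P hstar) Z fZ phi) => //.
  + exact: dens.
  + move=> z1 z2 e; case: (ltgtP z1 z2) => // h.
    * by have := phimon _ _ h; rewrite e ltxx.
    * by have := phimon _ _ h; rewrite e ltxx.
- move=> _; case: lf => l1 l2 l3; split => //.
  by move=> P' HP'; apply: stoch_le_sub SF (l3 P' HP').
Qed.
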